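(* Let $P$ be a finite $p$-group which is neither cyclic nor generalized quaternion, and let $1\neq H<P$ be a proper non-trivial subgroup. Then there exist subgroups $K'\trianglelefteq H'\le P$ with proper inclusions $K'<H<H'$ such that $H'/K'$ is elementary abelian (necessarily of $p$-rank at least two).
   Context: The generalized quaternion group of order $2^n$, $n\ge3$, is $Q_{2^n}=\langle x,y\mid x^{2^{n-1}}=1,\ y^2=x^{2^{n-2}},\ yxy^{-1}=x^{-1}\rangle$ (only relevant for $p=2$). *)

(* Defs.v *)
From mathcomp Require Import all_boot all_fingroup all_solvable.
Set Implicit Arguments. Unset Strict Implicit. Unset Printing Implicit Defensive.
Local Open Scope group_scope.

(* G is a generalized quaternion group: isomorphic to Q_(2^n) for some n >= 3
   (MathComp's 'Q_m from extremal.v, the group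
   <x, y | x^(2^(n-1)) = 1, y^2 = x^(2^(n-2)), x^y = x^-1>). *)
Definition gen_quaternion (gT : finGroupType) (G : {set gT}) : Prop :=
  exists n : nat, 2 < n /\ G \isog 'Q_(2 ^ n).

(* Main.v *)
Require Import Defs.
From mathcomp Require Import all_boot all_fingroup all_solvable.
From mathcomp Require Import zify.
Local Open Scope group_scope.

Lemma quat_nsub (gT : finGroupType) (N K : {group gT}) (n : nat) (x y : gT) :
  2 < n -> extremal_generators N 2 n (x, y) -> N \isog 'Q_(2 ^ n) ->
  K <| N -> (4 * #|K| <= #|N|)%N -> K \subset <[x]>.
Proof.
move=> n2 gen iso nsKN le4.
have [[_ _ inv] _ _ _ _] := quaternion_structure n2 gen iso.
have [oN Nx ox _] := gen.
have [sKN nKN] := andP nsKN.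
apply/subsetP => k Kk; apply/idPn => Xk.
have Nk : k \in N by apply: (subsetP sKN).
have Nk' : k^-1 \in N :\: <[x]> by rewrite inE groupV Xk groupV.
have e1 : x ^ k^-1 = x^-1 := inv x _ (cycle_id x) Nk'.
have kx : k * x = x^-1 * k.
  move: e1; rewrite /conjg invgK => <-.
  by rewrite -!mulgA (mulVg k) mulg1.
have Kx2 : (x ^+ 2)^-1 \in K.
  have : k ^ x \in K by rewrite memJ_norm // (subsetP nKN).
  rewrite /conjg kx mulgA => H1.
  have := groupM H1 (groupVr Kk); rewrite mulgK expgS expg1 invMg.
  by [].
have sX2K : <[x ^+ 2]> \subset K by rewrite cycle_subG -groupV.
have pr : <[x ^+ 2]> \proper K.
  rewrite properE sX2K /=; apply: contra Xk => sK.
  exact: (subsetP (subset_trans sK (cycleX x 2))).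
have dv := cardSg sX2K.
have lt := proper_card pr.
have en : n.-1 = n.-2.+1 by case: n n2 {gen iso oN ox} => [|[|]].
have en2 : n = n.-2.+2 by case: n n2 {gen iso oN ox en} => [|[|]].
have o2 : #|<[x ^+ 2]>| = (2 ^ n.-2)%N.
  rewrite -orderE orderXdiv ox en expnS ?mulKn //.
  exact: dvdn_mulr.
have oN' : #|N| = (4 * 2 ^ n.-2)%N by rewrite oN {1}en2 !expnS mulnA.
move: dv lt le4; rewrite o2 oN' => /dvdnP[c ->].
have : (0 < 2 ^ n.-2)%N by rewrite expn_gt0.
nia.
Qed.
Lemma lift (gT : finGroupType) (P H : {group gT}) (xb : coset_of H) :
  H \subset P -> xb \in 'N_P(H) / H ->
  [/\ coset H @*^-1 <[xb]> \subset P, H \subset coset H @*^-1 <[xb]>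
    & #|coset H @*^-1 <[xb]>| = (#|H| * #[xb])%N].
Proof.
move=> sHP Nxb.
have nHN : 'N_P(H) \subset 'N(H) := subsetIr _ _.
have sub : <[xb]> \subset coset H @* 'N(H).
  by rewrite cycle_subG (subsetP (morphimS _ nHN)).
split.
- apply: subset_trans (subsetIl P 'N(H)).
  rewrite -(quotientGK (normalSG sHP)) morphpreS //.
  by rewrite cycle_subG.
- by have := ker_sub_pre (coset H) <[xb]>%G; rewrite ker_coset.
- by rewrite card_morphpre // ker_coset -orderE.
Qed.

Arguments lift {gT P H xb}.
Arguments quat_nsub {gT N K n x y}.

Lemma good (gT : finGroupType) (p : nat) (P H : {group gT}) :
  prime p -> p.-group P -> ~~ cyclic P -> ~ gen_quaternion P ->
  H \proper P -> H :!=: 1 ->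
  exists H' : {group gT},
    [/\ H' \subset P, H \subset H', #|H'| = (#|H| * p)%N & ~~ cyclic H'].
Proof.
move=> pr pP ncP nqP prHP ntH.
have sHP := proper_sub prHP.
pose N := 'N_P(H)%G.
have prHN : H \proper N := nilpotent_proper_norm (pgroup_nil pP) prHP.
have sHN := proper_sub prHN.
have sNP : N \subset P := subsetIl _ _.
have nHN : N \subset 'N(H) := subsetIr _ _.
have pN : p.-group N := pgroupS sNP pP.
have pH : p.-group H := pgroupS sHP pP.
have [_ p_dv_H _] := pgroup_pdiv pH ntH.
case cH: (cyclic H); last first.
  have p_dv : p %| #|N / H|.
    have pNH : p.-group (N / H) := quotient_pgroup _ pN.
    have ntNH : N / H != 1.
      by rewrite -cardG_gt1 card_quotient // indexg_gt1 proper_subn.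
    by have [] := pgroup_pdiv pNH ntNH.
  have [xb Nxb oxb] := Cauchy pr p_dv.
  have [sH'P sHH' cH'] := lift sHP Nxb.
  exists (coset H @*^-1 <[xb]>)%G; split => //; first by rewrite cH' oxb.
  by apply: contra (negbT cH) => cyc; apply: cyclicS sHH' cyc.
case: (boolP [exists x in N, (#[x] == p) && (x \notin H)]).
  case/exists_inP => x Nx /andP[/eqP ox Hx].
  have xN : x \in 'N(H) := subsetP nHN x Nx.
  have oxb : #[coset H x] = p.
    apply: nt_prime_order pr _ _.
      by rewrite -morphX // -ox expg_order morph1.
    by apply: contra Hx => /eqP; apply: coset_idr.
  have Nxb : coset H x \in N / H := mem_quotient H Nx.
  have [sH'P sHH' cH'] := lift sHP Nxb.
  exists (coset H @*^-1 <[coset H x]>)%G; split => //; first by rewrite cH' oxb.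
  apply/negP => cyc.
  have xH' : x \in coset H @*^-1 <[coset H x]> by rewrite mem_morphpre // cycle_id.
  have : <[x]> \subset H.
    by rewrite -(cardSg_cyclic cyc) ?cycle_subG // -orderE ox.
  by rewrite cycle_subG (negPf Hx).
rewrite negb_exists_in => /forall_inP allH.
have oO : #|'Ohm_1(N)| = p.
  rewrite -(Ohm1_cyclic_pgroup_prime cH pH ntH).
  suff -> : 'Ohm_1(N) = 'Ohm_1(H) by [].
  apply/eqP; rewrite eqEsubset (OhmS _ sHN) andbT.
  rewrite (OhmE 1 pN) gen_subG; apply/subsetP => z; rewrite in_set expn1 => /andP[Nz z1].
  change (z \in 'Ohm_1(H)); rewrite (OhmE 1 pH) mem_gen // in_set expn1 z1 andbT.
  case: (eqVneq z 1) => [-> | nz]; first exact: group1.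
  have z1' : z ^+ p == 1 by move: z1; rewrite inE.
  by have := allH z Nz; rewrite (nt_prime_order pr (eqP z1') nz) eqxx /= negbK.
have ntN : N :!=: 1 by apply: subG1_contra sHN ntH.
have cq := introT (prime_Ohm1P pN ntN) oO.
case: (boolP (~~ cyclic N && (#|N| == #|H| * p)%N)).
  by case/andP => ncN /eqP oN; exists N; split.
move=> notN.
have [C [cC sCN HC]] : exists C : {group gT},
    [/\ cyclic C, C \subset N & forall g, g \in 'N_P(N) -> H :^ g \subset C].
  case cN: (cyclic N).
    by exists N; split => // g /setIP[_ /normP nNg]; rewrite -nNg conjSg.
  move: cq; rewrite cN /= => /andP[/eqP p2 /eqP/quaternion_classP[n n2 iso]].
  have [[x y] gen _] := generators_quaternion n2 iso.
  have le4 : (4 * #|H| <= #|N|)%N.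
    have pi : p.-nat #|N : H| := pnat_dvd (dvdn_indexg N H) pN.
    have [k ek] := p_natP pi.
    have gt1 : (1 < #|N : H|)%N by rewrite indexg_gt1 proper_subn.
    move: notN; rewrite cN /= -(Lagrange sHN) ek p2.
    move: gt1; rewrite ek p2.
    case: k {ek} => [|[|k]] //; first by rewrite eqxx.
    move=> _ _; rewrite mulnC leq_pmul2l ?cardG_gt0 // !expnS mulnA.
    by rewrite leq_pmulr // expn_gt0.
  exists <[x]>%G; split; [exact: cycle_cyclic | by rewrite cycle_subG; case: gen | ].
  move=> g /setIP[_ /normP nNg].
  apply: (quat_nsub n2 gen iso); last by rewrite cardJg.
  change (H :^ g <| 'N_P(H)); rewrite -nNg normalJ; apply: normalSG sHP.
have sNN : 'N_P(N) \subset N.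
  apply/subsetP => g Ng; have Pg : g \in P by case/setIP: Ng.
  rewrite inE Pg /=; apply/normP.
  have HC1 := HC 1 (group1 _); rewrite conjsg1 in HC1.
  apply/eqP; rewrite (eq_subG_cyclic (H := (H :^ g)%G) cC) ?cardJg ?HC //.
have NP : N :=: P.
  apply/eqP; rewrite eqEsubset sNP /=.
  case: (boolP (P \subset N)) => // nPN.
  have prNP : N \proper P by rewrite properE sNP.
  have := nilpotent_proper_norm (pgroup_nil pP) prNP.
  by rewrite properE sNN andbF.
rewrite NP in cq; case/orP: cq; first by rewrite (negPf ncP).
case/andP=> _ /eqP/quaternion_classP[n n2 iso]; case: nqP; exists n; by split.

Qed.

Theorem proposition5p4 (gT : finGroupType) (p : nat) (P H : {group gT}) :
  prime p -> p.-group P -> ~~ cyclic P -> ~ gen_quaternion P ->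
  H \proper P -> H :!=: 1 ->
  exists K' H' : {group gT},
    [/\ K' <| H', H' \subset P, K' \proper H, H \proper H'
      & p.-abelem (H' / K')].
Proof.
move=> pr pP ncP nqP prHP ntH.
have [H' [sH'P sHH' oH' ncH']] := @good _ _ _ _ pr pP ncP nqP prHP ntH.
have pH' : p.-group H' := pgroupS sH'P pP.
have iH : #|H' : H| = p.
  by apply/eqP; rewrite -(eqn_pmul2l (cardG_gt0 H)) Lagrange // oH'.
have maxH : maximal H H' by apply: p_index_maximal; rewrite ?iH.
have sPhiH : 'Phi(H') \subset H := Phi_sub_max maxH.
exists 'Phi(H')%G, H'; split.
- exact: Phi_normal.
- exact: sH'P.
- rewrite properEneq sPhiH andbT; apply/eqP => E.
  case/negP: ncH'; apply: Phi_quotient_cyclic.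
  have E' : 'Phi(H') = H by have := congr1 val E.
  rewrite E' prime_cyclic // card_quotient ?iH //.
  exact: normal_norm (p_maximal_normal pH' maxH).
- by rewrite properE sHH' /= -indexg_gt1 iH prime_gt1.
- exact: Phi_quotient_abelem.
Qed.
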